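(* Let $T$ be a tree with positive edge weights rooted at the homebase $r$, and let $q\ge 0$. In every cost-optimal strategy exploring $T$, for every vertex $v\neq r$, once an agent leaves the subtree $T_v$ (i.e., traverses the edge from $v$ to its parent $p(v)$ after having been in $T_v$), it never comes back to $T_v$.
   Context: Exploration model: given a connected graph with positive edge weights, a homebase vertex, and invoking cost $q\ge 0$, a strategy is a sequence of moves, each either invoking a new agent (appearing at the homebase) or an agent traversing an edge incident to its current vertex. A vertex is explored when first visited; the strategy explores the graph when every vertex has been visited by some agent (agents need not return). With $k$ agents, agent $i$ traversing total distance $d_i$ (weights counted with multiplicity), the cost is $kq+\sum_i d_i$; a strategy is cost-optimal if it explores the graph with minimum cost (off-line setting). For a rooted tree, $T_v$ is the subtree consisting of $v$ and its descendants and $p(v)$ is the parent of $v$. *)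

(* Defs.v *)
From HB Require Import structures.
From mathcomp Require Import all_boot all_order all_algebra.
From mathcomp Require Import reals.
Set Implicit Arguments. Unset Strict Implicit. Unset Printing Implicit Defensive.
Import Order.TTheory GRing.Theory Num.Theory.
Local Open Scope ring_scope.

(* A rooted tree on the finite vertex set V is given by its root r and its
   parent map p : V -> V with p r = r, such that every vertex reaches r by
   iterating p (so there are no other cycles).  The edges are {v, p v} for
   v != r, and the weight of the edge {v, p v} is w v. *)
Definition is_rooted_tree (V : finType) (r : V) (p : V -> V) : Prop :=
  p r = r /\ forall v : V, exists n : nat, iter n p v = r.

Definition tadj (V : finType) (r : V) (p : V -> V) (x u : V) : bool :=
  ((x != r) && (u == p x)) || ((u != r) && (x == p u)).

Definition tweight (R : realType) (V : finType) (r : V) (p : V -> V)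
  (w : V -> R) (x u : V) : R :=
  if (x != r) && (u == p x) then w x else w u.

Definition in_subtree (V : finType) (p : V -> V) (v u : V) : Prop :=
  exists n : nat, iter n p u = v.

(* Moves: invoke a new agent (it appears at the homebase), or agent number i
   (agents numbered 0,1,... in invocation order) traverses an edge to u. *)
Inductive move (V : Type) : Type :=
| Invoke : move V
| Step : nat -> V -> move V.
Arguments Invoke {V}.

Definition apply_move (V : Type) (r : V) (pos : seq V) (m : move V) : seq V :=
  match m with
  | Invoke => rcons pos r
  | Step i u => set_nth r pos i u
  end.

Definition positions (V : Type) (r : V) (s : seq (move V)) : seq V :=
  foldl (apply_move r) [::] s.

(* position of agent i just before move t (i.e. after the first t moves) *)
Definition pos_at (V : Type) (r : V) (s : seq (move V)) (t i : nat) : V :=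
  nth r (positions r (take t s)) i.

Definition valid_move (V : finType) (r : V) (p : V -> V)
  (pos : seq V) (m : move V) : bool :=
  match m with
  | Invoke => true
  | Step i u => (i < size pos)%N && tadj r p (nth r pos i) u
  end.

Definition valid_strategy (V : finType) (r : V) (p : V -> V)
  (s : seq (move V)) : Prop :=
  forall t : nat, (t < size s)%N ->
    valid_move r p (positions r (take t s)) (nth Invoke s t).

Definition visited (V : finType) (r : V) (s : seq (move V)) (x : V) : Prop :=
  exists t : nat, (t < size s)%N /\
    (nth Invoke s t = Invoke /\ x = r \/ exists i, nth Invoke s t = Step i x).

Definition explores (V : finType) (r : V) (s : seq (move V)) : Prop :=
  forall x : V, visited r s x.

Definition move_cost (R : realType) (V : finType) (r : V) (p : V -> V)
  (w : V -> R) (q : R) (pos : seq V) (m : move V) : R :=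
  match m with
  | Invoke => q
  | Step i u => tweight r p w (nth r pos i) u
  end.

Definition cost (R : realType) (V : finType) (r : V) (p : V -> V)
  (w : V -> R) (q : R) (s : seq (move V)) : R :=
  \sum_(t < size s) move_cost r p w q (positions r (take t s)) (nth Invoke s t).

Definition cost_optimal (R : realType) (V : finType) (r : V) (p : V -> V)
  (w : V -> R) (q : R) (s : seq (move V)) : Prop :=
  valid_strategy r p s /\ explores r s /\
  forall s' : seq (move V), valid_strategy r p s' -> explores r s' ->
    cost r p w q s <= cost r p w q s'.

(* Main.v *)
Require Import Defs.
From HB Require Import structures.
From mathcomp Require Import all_boot all_order all_algebra.
From mathcomp Require Import reals.
From Stdlib Require Import Classical.
From mathcomp Require Import zify lra.
Import Order.TTheory GRing.Theory Num.Theory.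
Local Open Scope ring_scope.
Set Implicit Arguments. Unset Strict Implicit. Unset Printing Implicit Defensive.

Section Aux.
Variables (V : finType) (r : V) (p : V -> V).

Definition isInv (m : move V) : bool := if m is Invoke then true else false.
Definition ninv (s : seq (move V)) : nat := count isInv s.
Fixpoint proj (j : nat) (s : seq (move V)) : seq V :=
  match s with
  | [::] => [::]
  | Invoke :: s' => proj j s'
  | Step k u :: s' => if k == j then u :: proj j s' else proj j s'
  end.
Definition notI (i : nat) (m : move V) : bool :=
  match m with Step k _ => k != i | Invoke => true end.
Definition valid' (pre : seq (move V)) (m : move V) : bool :=
  match m with
  | Invoke => true
  | Step j u => (j < ninv pre)%N && tadj r p (last r (proj j pre)) u
  end.
Definition good (s : seq (move V)) : Prop :=
  forall t, (t < size s)%N -> valid' (take t s) (nth Invoke s t).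

Lemma proj_cat j s1 s2 : proj j (s1 ++ s2) = proj j s1 ++ proj j s2.
Proof.
elim: s1 => [|[|k u] s1 IH] //=; rewrite IH //; by case: (k == j).
Qed.

Lemma proj_rcons j s m : proj j (rcons s m) =
  match m with Step k u => if k == j then rcons (proj j s) u else proj j s
  | Invoke => proj j s end.
Proof.
rewrite -cats1 proj_cat; case: m => [|k u] /=; first by rewrite cats0.
by case: (k == j); rewrite ?cats1 ?cats0.
Qed.

Lemma ninv_cat s1 s2 : ninv (s1 ++ s2) = (ninv s1 + ninv s2)%N.
Proof. by rewrite /ninv count_cat. Qed.

Lemma positions_rcons s m : positions r (rcons s m) = apply_move r (positions r s) m.
Proof. by rewrite /positions foldl_rcons. Qed.

Lemma nth_positions s j : nth r (positions r s) j = last r (proj j s).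
Proof.
elim/last_ind: s => [|s m IH]; first by rewrite nth_nil.
rewrite positions_rcons proj_rcons; case: m => [|k u] /=.
  rewrite nth_rcons IH; case: ltnP => // H; rewrite -IH nth_default //.
  by case: (_ == _).
rewrite nth_set_nth /= IH; case: eqP => [->|/eqP H]; first by rewrite eqxx last_rcons.
by rewrite eq_sym (negbTE H).
Qed.

Lemma prefix_rcons (P : seq (move V) -> move V -> Prop) s m :
  (forall t, (t < size (rcons s m))%N -> P (take t (rcons s m)) (nth Invoke (rcons s m) t)) <->
  (forall t, (t < size s)%N -> P (take t s) (nth Invoke s t)) /\ P s m.
Proof.
rewrite size_rcons; split.
  move=> H; split.
    move=> t Ht; have := H t (ltnW Ht).
    by rewrite -cats1 take_cat nth_cat Ht.
  have := H (size s) (ltnSn _).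
  by rewrite -cats1 take_cat nth_cat ltnn subnn take0 cats0 /=.
move=> [H1 H2] t; rewrite ltnS leq_eqVlt => /orP [/eqP ->|Ht].
  by rewrite -cats1 take_cat nth_cat ltnn subnn take0 cats0 /=.
by rewrite -cats1 take_cat nth_cat Ht; apply: H1.
Qed.

Lemma good_rcons s m : good (rcons s m) <-> good s /\ valid' s m.
Proof. exact: (prefix_rcons (fun a b => valid' a b)). Qed.

Lemma size_positions s : good s -> size (positions r s) = ninv s.
Proof.
elim/last_ind: s => [|s m IH]; first by [].
move/good_rcons => [Hg Hv]; rewrite positions_rcons -cats1 ninv_cat.
case: m Hv => [|k u] /= Hv; first by rewrite size_rcons IH ?addn1.
rewrite size_set_nth IH //; move/andP: Hv => [Hk _].
rewrite !addn0; exact/maxn_idPr.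
Qed.

Lemma valid_good s : valid_strategy r p s <-> good s.
Proof.
elim/last_ind: s => [|s m IH]; first by split => ? t.
apply: iff_trans (prefix_rcons (fun a b => valid_move r p (positions r a) b) s m) _.
rewrite good_rcons -/(valid_strategy r p s) IH.
split => -[Hg Hv]; split => //; move: Hv; case: m => [|k u] //=;
  by rewrite size_positions // nth_positions.
Qed.

Lemma path_proj s i : good s -> path (tadj r p) r (proj i s).
Proof.
elim/last_ind: s => [|s m IH] //.
move/good_rcons => [Hg Hv]; rewrite proj_rcons.
case: m Hv => [|k u] /= Hv; first exact: IH.
case: eqP => [Hk|]; last by move=> _; exact: IH.
subst k; rewrite rcons_path IH //=; by case/andP: Hv.
Qed.

Lemma proj_filter_neq i k s : k != i -> proj k (filter (notI i) s) = proj k s.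
Proof.
move=> Hk; elim: s => [|[|j u] s IH] //=.
case: eqP => [->|Hj] /=; first by rewrite eq_sym (negbTE Hk) IH.
by case: (j == k); rewrite IH.
Qed.

Lemma proj_filter_eq i s : proj i (filter (notI i) s) = [::].
Proof.
elim: s => [|[|j u] s IH] //=.
by case: eqP => [->|Hj] /=; rewrite ?eqxx //; case: eqP.
Qed.

Lemma ninv_filter i s : ninv (filter (notI i) s) = ninv s.
Proof. elim: s => [|[|j u] s IH] //=; rewrite /ninv /= -/(ninv _) ?IH //.
by case: (j != i) => //=; rewrite -/(ninv _) IH.
Qed.

Lemma good_filter i s : good s -> good (filter (notI i) s).
Proof.
elim/last_ind: s => [|s m IH] //.
move/good_rcons => [Hg Hv]; rewrite filter_rcons.
case: ifP => Hm; last exact: IH.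
apply/good_rcons; split; first exact: IH.
case: m Hv Hm => [|k u] //= Hv Hm.
by rewrite ninv_filter proj_filter_neq.
Qed.

Lemma proj_map_steps i j P : proj j (map (Step i) P) = if i == j then P else [::].
Proof. elim: P => [|x P IH] /=; first by case: (i == j). by case: (i == j) IH => //= ->. Qed.

Lemma good_steps F i P : good F -> (i < ninv F)%N -> proj i F = [::] ->
  path (tadj r p) r P -> good (F ++ map (Step i) P).
Proof.
move=> HF Hi Hp; elim/last_ind: P => [|P x IH]; first by rewrite cats0.
rewrite rcons_path => /andP [HP Hx].
rewrite map_rcons -rcons_cat; apply/good_rcons; split; first exact: IH.
rewrite /= ninv_cat proj_cat Hp proj_map_steps eqxx /= Hx andbT.
by apply: (leq_trans Hi); rewrite leq_addr.
Qed.

End Aux.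

Section Tree.
Variables (V : finType) (r : V) (p : V -> V).

Lemma iter_r n : p r = r -> iter n p r = r.
Proof. by move=> H; elim: n => //= n ->. Qed.

Lemma not_sub_r v : p r = r -> v != r -> ~ in_subtree p v r.
Proof. by move=> H Hv [n]; rewrite iter_r // => E; rewrite E eqxx in Hv. Qed.

Lemma iter_cycle v n k : iter n.+1 p v = v -> iter (k * n.+1) p v = v.
Proof.
move=> H; elim: k => [|k IH] //.
by rewrite mulSn iterD IH H.
Qed.

Lemma not_sub_pv v : is_rooted_tree r p -> v != r -> ~ in_subtree p v (p v).
Proof.
move=> [Hr Hall] Hv [n Hn].
have Hc : iter n.+1 p v = v by rewrite iterSr.
have [m Hm] := Hall v.
have := @iter_cycle v n m Hc.
have -> : (m * n.+1 = (m * n.+1 - m) + m)%N.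
  by rewrite subnK // leq_pmulr.
rewrite iterD Hm iter_r // => E.
by rewrite -E eqxx in Hv.
Qed.

Lemma cross_edge v x y : tadj r p x y -> ~ in_subtree p v x -> in_subtree p v y ->
  x = p v /\ y = v.
Proof.
rewrite /tadj => /orP [/andP [_ /eqP Hy]|/andP [_ /eqP Hx]] Hnx [n Hn].
  by exfalso; apply: Hnx; exists n.+1; rewrite iterSr -Hy.
case: n Hn => [|n] Hn; first by move: Hn => /= Hn; subst.
by exfalso; apply: Hnx; exists n; rewrite Hx -iterSr.
Qed.

Lemma cross_path v x l : path (tadj r p) x l -> ~ in_subtree p v x ->
  in_subtree p v (last x l) -> exists l0 l1, l = l0 ++ v :: l1 /\ last x l0 = p v.
Proof.
elim: l x => [|y l IH] x /=; first by move=> _ H1 H2.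
move=> /andP [Hxy Hp] Hnx Hl.
case: (classic (in_subtree p v y)) => Hy.
  have [-> ->] := @cross_edge v x y Hxy Hnx Hy.
  by exists [::], l.
have [l0 [l1 [-> E]]] := IH y Hp Hy Hl.
by exists (y :: l0), l1.
Qed.

End Tree.

Section Cost.
Variables (R : realType) (V : finType) (r : V) (p : V -> V) (w : V -> R) (q : R).

Fixpoint wcost (x : V) (l : seq V) : R :=
  match l with [::] => 0 | y :: l' => tweight r p w x y + wcost y l' end.

Lemma wcost_cat x l1 l2 : wcost x (l1 ++ l2) = wcost x l1 + wcost (last x l1) l2.
Proof. by elim: l1 x => [|y l1 IH] x /=; rewrite ?add0r // IH addrA. Qed.

Lemma wcost_rcons x l y : wcost x (rcons l y) = wcost x l + tweight r p w (last x l) y.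
Proof. by rewrite -cats1 wcost_cat /= addr0. Qed.

Lemma cost_rcons s m : cost r p w q (rcons s m) =
  cost r p w q s + move_cost r p w q (positions r s) m.
Proof.
rewrite /cost size_rcons big_ord_recr /=; congr (_ + _).
  apply: eq_bigr => t _; by rewrite -cats1 take_cat nth_cat ltn_ord.
by rewrite -cats1 take_cat nth_cat ltnn subnn take0 cats0.
Qed.

Lemma cost_split i s : cost r p w q s =
  cost r p w q (filter (notI i) s) + wcost r (proj i s).
Proof.
elim/last_ind: s => [|s m IH]; first by rewrite /cost big_ord0 /= addr0.
rewrite cost_rcons filter_rcons proj_rcons IH.
case: m => [|k u] /=; first by rewrite cost_rcons /= addrAC.
rewrite nth_positions; case: (eqVneq k i) => [->|Hk] /=.
  by rewrite ?eqxx wcost_rcons addrA.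
rewrite ?Hk ?(negbTE Hk) /= cost_rcons /= nth_positions proj_filter_neq //.
by rewrite addrAC.
Qed.

End Cost.

Section Visit.
Variables (V : finType) (r : V).

Definition isStepTo (j : nat) (x : V) (m : move V) : bool :=
  if m is Step k u then (k == j) && (u == x) else false.

Lemma mem_proj j x s : (x \in proj j s) = has (isStepTo j x) s.
Proof.
elim: s => [|[|k u] s IH] //=.
have [Hkj|Hk] := eqVneq k j.
  by subst k; rewrite ?eqxx in_cons IH eq_sym.
by rewrite ?(negbTE Hk) /= IH.
Qed.

Lemma visitedE s x : visited r s x <->
  (x = r /\ has (@isInv V) s) \/ exists j, x \in proj j s.
Proof.
split.
  move=> [t [Ht [[Hm ->]|[j Hm]]]].
    left; split => //; apply/(has_nthP Invoke); exists t => //; by rewrite Hm.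
  right; exists j; rewrite mem_proj; apply/(has_nthP Invoke); exists t => //.
  by rewrite Hm /= !eqxx.
move=> [[-> /(has_nthP Invoke) [t Ht Hm]]|[j]].
  exists t; split => //; left; split => //; move: Hm; by case: (nth _ _ _).
rewrite mem_proj => /(has_nthP Invoke) [t Ht Hm].
exists t; split => //; right; exists j; move: Hm.
by case: (nth _ _ _) => // k u /andP [/eqP -> /eqP ->].
Qed.

End Visit.

Lemma filter_steps (V : finType) i (P : seq V) : filter (notI i) (map (Step i) P) = [::].
Proof. by elim: P => //= x P ->; rewrite eqxx. Qed.

Theorem mainTheorem5 (R : realType) (V : finType) (r : V) (p : V -> V)
  (w : V -> R) (q : R) :
  is_rooted_tree r p ->
  (forall v : V, v != r -> 0 < w v) ->
  0 <= q ->
  forall s : seq (move V), cost_optimal r p w q s ->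
  forall (v : V), v != r ->
  forall (i t1 : nat), (t1 < size s)%N ->
    pos_at r s t1 i = v -> nth Invoke s t1 = Step i (p v) ->
    forall t2 : nat, (t1 < t2)%N -> (t2 <= size s)%N ->
      ~ in_subtree p v (pos_at r s t2 i).
Proof.
move=> Htree Hw Hq s [Hval [Hexp Hopt]] v Hv i t1 Ht1 Hpos1 Hm1 t2 Ht12 Ht2 Hsub.
have Hg : good r p s by apply/valid_good.
set X := take t1 s; set rest := drop t1.+1 s.
have Hs : s = X ++ Step i (p v) :: rest.
  by rewrite -Hm1 -drop_nth // cat_take_drop.
have HX : size X = t1 by rewrite size_take Ht1.
move: (Hg t1 Ht1); rewrite Hm1 /= => /andP [HiX _].
have Hlast : last r (proj i X) = v by rewrite -Hpos1 /pos_at nth_positions.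
set k := (t2 - t1.+1)%N.
have Ht2s : take t2 s = X ++ Step i (p v) :: take k rest.
  rewrite {1}Hs take_cat HX ltnNge (ltnW Ht12) /=.
  have -> : (t2 - t1 = k.+1)%N by rewrite /k; lia.
  by [].
move: Hsub; rewrite /pos_at nth_positions Ht2s proj_cat /= eqxx last_cat Hlast /=.
set b' := proj i (take k rest); set b'' := proj i (drop k rest); set a := proj i X.
move=> Hsub.
have HPi : proj i s = a ++ p v :: b' ++ b''.
  by rewrite {1}Hs proj_cat /= eqxx -proj_cat cat_take_drop.
move: (path_proj i Hg); rewrite HPi cat_path Hlast /= cat_path => /and4P [Ha Hvpv Hb' Hb''].
have [a0 [a1 [Ea Ea0]]] : exists a0 a1, a = a0 ++ v :: a1 /\ last r a0 = p v.
  apply: (cross_path Ha (not_sub_r Htree.1 Hv)).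
  by rewrite Hlast; exists 0%N.
have [b0 [b1 [Eb Eb0]]] := cross_path Hb' (not_sub_pv Htree Hv) Hsub.
have Ea1 : last v a1 = v by move: Hlast; rewrite -/a Ea last_cat /=.
set P' := a0 ++ b0 ++ v :: a1 ++ (b1 ++ b'').
have HP' : path (tadj r p) r P'.
  move: Ha Hb' Hb''; rewrite /P' Ea Eb !cat_path /= !last_cat /= Ea0 Eb0.
  move=> /and3P [H1 H2 H3] /and3P [H4 _ H5] H6.
  by rewrite H1 H2 H4 /= !cat_path Ea1 H3 H5 H6.
set F := filter (notI i) s.
set s' := F ++ map (Step i) P'.
have Hins : (i < ninv s)%N.
  by apply: (leq_trans HiX); rewrite -{2}(cat_take_drop t1 s) ninv_cat leq_addr.
have Hg' : good r p s'.
  apply: good_steps => //; first exact: good_filter.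
  - by rewrite ninv_filter.
  - exact: proj_filter_eq.
have HPs' : proj i s' = P' by rewrite proj_cat proj_filter_eq proj_map_steps eqxx.
have Hcs' : cost r p w q s' = cost r p w q F + wcost r p w r P'.
  by rewrite (cost_split r p w q i) -HPs' /s' filter_cat filter_id filter_steps cats0.
have Hcs : cost r p w q s = cost r p w q F + wcost r p w r (proj i s) by exact: cost_split.
have HW : wcost r p w r (proj i s) =
    wcost r p w r P' + (tweight r p w (p v) v + tweight r p w v (p v)).
  rewrite HPi Ea Eb /P' !(wcost_cat, last_cat) /= !(wcost_cat, last_cat) /= Ea0 Eb0 Ea1.
  lra.
have Hpos1' : 0 < tweight r p w v (p v) by rewrite /tweight Hv eqxx /=; exact: Hw.
have Hpos2' : 0 < tweight r p w (p v) v.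
  rewrite /tweight; case: ifP => [/andP [H _]|_]; exact: Hw.
have Hexp' : explores r s'.
  move=> x; have /visitedE := Hexp x.
  move=> Hx; apply/visitedE.
  have HinvS' : has (@isInv V) s'.
    rewrite has_cat; apply/orP; left.
    have : (0 < ninv F)%N by rewrite ninv_filter; lia.
    by rewrite has_count.
  case: Hx => [[-> _]|[j Hj]]; first by left.
  case: (eqVneq j i) => [Eji|Hji].
    subst j; move: Hj; rewrite HPi Ea Eb => Hj.
    have : (x \in P') || (x == p v).
      move: Hj; rewrite /P' !(mem_cat, in_cons).
      move: (x \in a0) (x \in a1) (x \in b0) (x \in b1) (x \in b'') (x == v) (x == p v).
      by do 7! case.
    case/orP => [HxP|/eqP Hxpv]; first by right; exists i; rewrite HPs'.
    have : p v \in r :: a0 by rewrite -Ea0 mem_last.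
    rewrite in_cons => /orP [/eqP Hpr|Hpa]; first by left; rewrite Hxpv Hpr.
    by right; exists i; rewrite HPs' Hxpv /P' mem_cat Hpa.
  right; exists j; rewrite /s' proj_cat proj_filter_neq // proj_map_steps.
  by rewrite eq_sym (negbTE Hji) cats0.
have := Hopt s' ((valid_good _ _ _).2 Hg') Hexp'.
lra.
Qed.
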